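(* Let $n,k,d$ be positive integers with $d<n$. For every $\mathcal{A}\subset 2^{[n]}$ with $\mathrm{VC}(\triangle\mathcal{A}^k)\le d$, we have $|\mathcal{A}|\le p(n,k,d)$. Moreover there exist families $\mathcal{A}\subset 2^{[n]}$ with $\mathrm{VC}(\triangle\mathcal{A}^k)\le d$ and $|\mathcal{A}|=p(n,k,d)$. That is, the maximum size of $\mathcal{A}\subset2^{[n]}$ with $\mathrm{VC}(\triangle\mathcal{A}^k)\le d$ equals $p(n,k,d)$.
   Context: $[n]=\{1,\dots,n\}$. $\mathrm{VC}(\mathcal{F})$ is the largest cardinality of a $Y\subset[n]$ with $\{S\cap Y:S\in\mathcal{F}\}=2^Y$. $\triangle\mathcal{A}^k=\{S_1\triangle\cdots\triangle S_k: S_i\in\mathcal{A}\}$ and $\cup\mathcal{A}^k=\{S_1\cup\cdots\cup S_k: S_i\in\mathcal{A}\}$ (the $S_i$ need not be distinct). A family $\mathcal{F}\subset2^{[n]}$ is $k$-wise $(n-d)$-union if every member of $\cup\mathcal{F}^k$ has cardinality at most $d$. $p(n,k,d)$ denotes the maximum size of a $k$-wise $(n-d)$-union family $\mathcal{F}\subset 2^{[n]}$. *)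

(* Defs.v *)
From mathcomp Require Import all_boot.
Set Implicit Arguments. Unset Strict Implicit. Unset Printing Implicit Defensive.

(* Ground set [n] is modelled by 'I_n; families are {set {set 'I_n}}. *)

Definition symdiff (T : finType) (A B : {set T}) : {set T} := (A :\: B) :|: (B :\: A).

Definition symdiff_pow (n k : nat) (A : {set {set 'I_n}}) : {set {set 'I_n}} :=
  [set S | [exists f : {ffun 'I_k -> {set 'I_n}},
      [forall i, f i \in A] && (S == \big[@symdiff _/set0]_(i < k) f i)]].

Definition union_pow (n k : nat) (A : {set {set 'I_n}}) : {set {set 'I_n}} :=
  [set S | [exists f : {ffun 'I_k -> {set 'I_n}},
      [forall i, f i \in A] && (S == \bigcup_(i < k) f i)]].

Definition shatters (n : nat) (F : {set {set 'I_n}}) (Y : {set 'I_n}) : bool :=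
  [set S :&: Y | S in F] == powerset Y.

Definition VC (n : nat) (F : {set {set 'I_n}}) : nat :=
  \max_(Y : {set 'I_n} | shatters F Y) #|Y|.

Definition kwise_union (n k d : nat) (F : {set {set 'I_n}}) : bool :=
  [forall S in union_pow k F, #|S| <= d].

Definition p (n k d : nat) : nat :=
  \max_(F : {set {set 'I_n}} | kwise_union k d F) #|F|.

(* Main.v *)
Require Import Defs.
From mathcomp Require Import all_boot.
Set Implicit Arguments. Unset Strict Implicit. Unset Printing Implicit Defensive.

Section Helpers.
Variables n k : nat.
Notation T := 'I_n.

Definition bsd (f : {ffun 'I_k -> {set T}}) := \big[@symdiff _/set0]_(i < k) f i.

Lemma in_symdiff (A B : {set T}) x : (x \in symdiff A B) = (x \in A) (+) (x \in B).
Proof. by rewrite /symdiff !inE; case: (x \in A); case: (x \in B). Qed.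

Lemma in_bsd f x : (x \in bsd f) = \big[addb/false]_(i < k) (x \in f i).
Proof.
rewrite /bsd; apply: (big_morph (fun S : {set T} => x \in S)).
- by move=> A B; rewrite in_symdiff.
- by rewrite inE.
Qed.

Lemma bigaddb_ex (F : 'I_k -> bool) : \big[addb/false]_(i < k) F i -> exists i, F i.
Proof.
case: (pickP F) => [i Fi|F0] H; first by exists i.
by rewrite big1 in H.
Qed.

Lemma bigaddb_flip (F G : 'I_k -> bool) j0 :
  G j0 = ~~ F j0 -> (forall j, j != j0 -> G j = F j) ->
  \big[addb/false]_(i < k) G i = ~~ \big[addb/false]_(i < k) F i.
Proof.
move=> H0 H1; rewrite (bigD1 j0) // [in RHS](bigD1 j0) //= H0 addNb.
congr (~~ (_ (+) _)); apply: eq_bigr => j /H1 //.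
Qed.

Lemma bigaddb_one (F : 'I_k -> bool) j0 :
  F j0 -> (forall j, j != j0 -> F j = false) -> \big[addb/false]_(i < k) F i.
Proof.
move=> H0 H1; rewrite (bigD1 j0) //= H0 big1 // => j /H1 //.
Qed.

Lemma shattersP (F : {set {set T}}) Y :
  shatters F Y <-> (forall Z : {set T}, Z \subset Y -> exists2 S, S \in F & S :&: Y = Z).
Proof.
rewrite /shatters; split.
- move/eqP=> E Z ZY; have : Z \in powerset Y by rewrite powersetE.
  by rewrite -E => /imsetP[S SF ->]; exists S.
- move=> H; apply/eqP/setP => Z; rewrite powersetE.
  apply/imsetP/idP => [[S _ ->]|]; first exact: subsetIr.
  by case/H => S SF <-; exists S.
Qed.

Lemma shattersP2 (A : {set {set T}}) Y :
  shatters (symdiff_pow k A) Y <->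
  (forall Z : {set T}, Z \subset Y -> exists f : {ffun 'I_k -> {set T}},
      (forall i, f i \in A) /\ bsd f :&: Y = Z).
Proof.
split.
- move/shattersP=> H Z /H [S]; rewrite inE => /existsP[f /andP[/forallP fA /eqP ->]] E.
  by exists f.
- move=> H; apply/shattersP => Z /H [f [fA E]]; exists (bsd f) => //.
  rewrite inE; apply/existsP; exists f; rewrite eqxx andbT; exact/forallP.
Qed.

Definition sh (i : T) (A : {set {set T}}) (S : {set T}) :=
  if (i \in S) && (S :\ i \notin A) then S :\ i else S.
Definition shift i A := [set sh i A S | S in A].

Lemma sh_inj i (A : {set {set T}}) : {in A &, injective (sh i A)}.
Proof.
move=> S S' SA SA'; rewrite /sh.
case: ifP => [/andP[iS nA]|h1]; case: ifP => [/andP[iS' nA']|h2] //.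
- move=> E; apply/setP => x; case: (x =P i) => [->|/eqP ne]; first by rewrite iS iS'.
  by move/setP/(_ x): E; rewrite !inE ne.
- by move=> E; rewrite E SA' in nA.
- by move=> E; rewrite -E SA in nA'.
Qed.

Lemma card_shift i (A : {set {set T}}) : #|shift i A| = #|A|.
Proof. exact: card_in_imset (@sh_inj i A). Qed.

Lemma shift_i i (A : {set {set T}}) b : b \in shift i A -> i \in b -> b \in A /\ b :\ i \in A.
Proof.
case/imsetP => S SA ->; rewrite /sh; case: ifP => [_|h]; first by rewrite !inE eqxx.
move=> iS; rewrite iS /= in h; split => //; by move/negbFE: h.
Qed.

Definition pre i (A : {set {set T}}) (b : {set T}) := if b \in A then b else b :|: [set i].

Lemma pre_in i (A : {set {set T}}) b : b \in shift i A -> pre i A b \in A.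
Proof.
rewrite /pre; case: ifP => // nb /imsetP[S SA E]; move: E; rewrite /sh.
case: ifP => [/andP[iS _] ->|_ E]; last by rewrite E SA in nb.
by rewrite setUC setD1K.
Qed.

Lemma pre_eq i (A : {set {set T}}) b x : x != i -> (x \in pre i A b) = (x \in b).
Proof. by move=> ne; rewrite /pre; case: ifP => //; rewrite !inE (negbTE ne) orbF. Qed.

Definition PP d (A : {set {set T}}) :=
  forall Y, shatters (symdiff_pow k A) Y -> #|Y| <= d.

Lemma shift_shatters i (A : {set {set T}}) Y :
  shatters (symdiff_pow k (shift i A)) Y -> shatters (symdiff_pow k A) Y.
Proof.
move/shattersP2 => H; apply/shattersP2 => Z ZY.
have preP (g : {ffun 'I_k -> {set T}}) : (forall j, g j \in shift i A) ->
    (forall j, [ffun j => pre i A (g j)] j \in A) /\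
    (forall x, x != i -> (x \in bsd [ffun j => pre i A (g j)]) = (x \in bsd g)).
  move=> gB; split; first by move=> j; rewrite ffunE pre_in.
  move=> x ne; rewrite !in_bsd; apply: eq_bigr => j _; by rewrite ffunE pre_eq.
case: (boolP (i \in Y)) => iY; last first.
  have [g [gB E]] := H Z ZY; have [fA fE] := preP g gB.
  exists [ffun j => pre i A (g j)]; split => //.
  rewrite -E; apply/setP => x; rewrite !inE.
  case: (boolP (x \in Y)) => xY; rewrite ?andbF ?andbT //.
  apply: fE; apply/eqP => exi; by move: xY; rewrite exi (negbTE iY).
have Z1Y : (Z :|: [set i]) \subset Y by rewrite subUset ZY sub1set.
have [g [gB E]] := H _ Z1Y.
have : i \in bsd g by move/setP/(_ i): E; rewrite !inE eqxx orbT => /andP[].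
rewrite in_bsd => /bigaddb_ex [j0 ij0].
have [gA gA'] := shift_i (gB j0) ij0.
have [fA fE] := preP g gB.
set f := [ffun j => pre i A (g j)] in fA fE.
have fj0 : f j0 = g j0 by rewrite ffunE /pre gA.
have offi : forall x, x != i -> (x \in bsd f :&: Y) = (x \in Z).
  move=> x ne; rewrite inE fE //; move/setP/(_ x): E; rewrite !inE (negbTE ne) orbF.
  by [].
case: (boolP ((i \in bsd f) == (i \in Z))) => /eqP hi.
  exists f; split => //; apply/setP => x; case: (x =P i) => [->|/eqP ne].
    by rewrite inE iY andbT hi.
  exact: offi.
set f' := [ffun j => if j == j0 then g j0 :\ i else f j].
exists f'; split.
  by move=> j; rewrite ffunE; case: ifP.
have fl : forall x, (x \in bsd f') = if x == i then ~~ (x \in bsd f) else (x \in bsd f).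
  move=> x; rewrite !in_bsd; case: eqP => [->|/eqP ne].
    apply: (@bigaddb_flip _ _ j0); first by rewrite ffunE eqxx fj0 !inE ?eqxx ij0.
    by move=> j /negbTE nj; rewrite ffunE nj.
  apply: eq_bigr => j _; rewrite ffunE; case: eqP => // ->.
  by rewrite fj0 !inE ne.
apply/setP => x; rewrite inE fl; case: (x =P i) => [->|/eqP ne].
  by rewrite iY andbT; case: (i \in Z) hi; case: (i \in bsd f).
by rewrite -offi // inE.
Qed.
Definition w (A : {set {set T}}) := \sum_(S in A) #|S|.

Lemma w_shift i (A : {set {set T}}) S0 : S0 \in A -> i \in S0 -> S0 :\ i \notin A ->
  w (shift i A) < w A.
Proof.
move=> S0A iS0 nA; rewrite /w /shift big_imset; last exact: sh_inj.
rewrite [X in _ < X](bigD1 S0) // [X in X < _](bigD1 S0) //=.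
have h1 : #|sh i A S0| < #|S0|.
  by rewrite /sh iS0 nA [X in _ < X](cardsD1 i) iS0.
have h2 : \sum_(S in A | S != S0) #|sh i A S| <= \sum_(S in A | S != S0) #|S|.
  apply: leq_sum => S _; rewrite /sh; case: ifP => // _.
  by rewrite [X in _ <= X](cardsD1 i); apply: leq_addl.
exact: (leq_add h1 h2).
Qed.

Lemma downclosed (A : {set {set T}}) :
  (forall i (S : {set T}), S \in A -> i \in S -> S :\ i \in A) ->
  forall S S' : {set T}, S \in A -> S' \subset S -> S' \in A.
Proof.
move=> H S S'; move e: #|S :\: S'| => m; elim: m S e => [|m IH] S e SA sub.
  have : S :\: S' = set0 by apply: cards0_eq.
  move/eqP; rewrite setD_eq0 => sub'.
  by have -> : S' = S by apply/eqP; rewrite eqEsubset sub sub'.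
have : 0 < #|S :\: S'| by rewrite e.
case/card_gt0P => i; rewrite inE => /andP[iS' iS].
apply: (IH (S :\ i)); last by rewrite subsetD1 sub iS'.
  move: e; rewrite (cardsD1 i) !inE iS' iS /= add1n => -[<-].
  apply: eq_card => x; rewrite !inE; by case: (x == i); case: (x \in S').
exact: H.
Qed.

Lemma down_kwise d (A : {set {set T}}) :
  (forall S S' : {set T}, S \in A -> S' \subset S -> S' \in A) -> PP d A -> kwise_union k d A.
Proof.
move=> DA PA; apply/forall_inP => U; rewrite inE => /existsP[f /andP[/forallP fA /eqP ->]].
apply: PA; apply/shattersP2 => Z ZU.
exists [ffun j => [set x in Z | [pick l | x \in f l] == Some j]]; split.
  move=> j; rewrite ffunE; apply: (DA (f j)) => //; apply/subsetP => x.
  rewrite inE => /andP[_]; case: (pickP (fun l => x \in f l)) => [l xl|_] /eqP // [<-] //.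
apply/setP => x; rewrite inE in_bsd.
case: (boolP (x \in Z)) => xZ.
  have xU := subsetP ZU x xZ; rewrite xU andbT.
  move: (xU) => /bigcupP[j0 _ xj0].
  have [l xl Hp] : exists2 l, x \in f l & [pick l | x \in f l] = Some l.
    case: pickP => [l xl|]; [by exists l | by move/(_ j0); rewrite xj0].
  apply: (@bigaddb_one _ l); first by rewrite ffunE inE xZ /=; apply/eqP; exact: Hp.
  move=> j nj; rewrite ffunE inE xZ Hp /=; apply/eqP => -[E]; by rewrite E eqxx in nj.
rewrite big1 // => j _; by rewrite ffunE inE (negbTE xZ).
Qed.

Lemma main d (A : {set {set T}}) : PP d A -> #|A| <= p n k d.
Proof.
move Hm: (w A) => m; elim/ltn_ind: m A Hm => m IH A Hm PA.
case: (boolP [exists i, exists S in A, (i \in S) && (S :\ i \notin A)]).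
  case/existsP => i /exists_inP[S SA /andP[iS nA]].
  rewrite -(card_shift i A); apply: (IH (w (shift i A))) => //.
    by rewrite -Hm; apply: w_shift SA iS nA.
  by move=> Y /shift_shatters; apply: PA.
move=> nex.
have D : forall i S, S \in A -> i \in S -> S :\ i \in A.
  move=> i S SA iS; apply: contraNT nex => nA; apply/existsP; exists i.
  by apply/exists_inP; exists S => //; rewrite iS.
have kw := down_kwise (downclosed D) PA.
exact: (@leq_bigmax_cond _ (fun F => kwise_union k d F) (fun F => #|F|) A kw).
Qed.

End Helpers.

Theorem theorem5 (n k d : nat) (hk : 0 < k) (hd : 0 < d) (hdn : d < n) :
  (forall A : {set {set 'I_n}}, VC (symdiff_pow k A) <= d -> #|A| <= p n k d) /\
  (exists A : {set {set 'I_n}}, VC (symdiff_pow k A) <= d /\ #|A| = p n k d).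
Proof.
split.
  move=> A HA; apply: main => Y sh.
  apply: leq_trans _ HA.
  exact: (@leq_bigmax_cond _ (fun Y => shatters (symdiff_pow k A) Y) (fun Y => #|Y|) Y sh).
have k0 : kwise_union k d (set0 : {set {set 'I_n}}).
  apply/forall_inP => S; rewrite inE => /existsP[f /andP[/forallP fA _]].
  by have := fA (Ordinal hk); rewrite inE.
case: (arg_maxnP (fun F : {set {set 'I_n}} => #|F|) k0) => F kF Fmax.
exists F; split; last first.
  apply/eqP; rewrite eqn_leq; apply/andP; split.
    exact: (@leq_bigmax_cond _ (fun F => kwise_union k d F) (fun F => #|F|) F kF).
  by apply/bigmax_leqP => G /Fmax.
apply/bigmax_leqP => Y /shattersP2 sh.
have [f [fA E]] := sh Y (subxx Y).
have YU : Y \subset \bigcup_(i < k) f i.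
  apply/subsetP => x xY; move/setP/(_ x): E; rewrite xY inE in_bsd => /andP[/bigaddb_ex [j xj] _].
  by apply/bigcupP; exists j.
apply: leq_trans (subset_leq_card YU) _.
move/forall_inP: kF; apply; rewrite inE; apply/existsP; exists f.
by rewrite eqxx andbT; apply/forallP.
Qed.
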